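(* For every $n\ge1$, \[ \inf_{\boldsymbol x\in S^n}C(\boldsymbol x)\ge\frac{\Lambda^2}{2\big(2n+2\operatorname{card}(E_{II})+\operatorname{card}(E_{IL})\big)}, \] where $\Lambda=\lambda(S)$.
   Context: Network: $(V,E)$ is a finite connected graph with at least one edge and no vertex of degree $2$; each edge $e$ has a length $\lambda(e)>0$. $S$ is the metric measure space obtained by identifying each edge with a segment of length $\lambda(e)$, with length measure $\lambda$ and shortest-path distance $d$. $V_I$ is the set of vertices of degree $\ge3$ and $V_L$ the set of vertices of degree $1$. $E_{II}$ is the set of edges with both endpoints in $V_I$, and $E_{IL}$ the set of edges with one endpoint in $V_I$ and the other in $V_L$. For $\boldsymbol x=(x_1,\dots,x_n)\in S^n$, the social cost is \[ C(\boldsymbol x)=\int_S\min_i d(x_i,y)\,d\lambda(y). \] *)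

(* Defs.v *)
From Stdlib Require Import Reals Lra List ClassicalEpsilon.
Import ListNotations.
Open Scope R_scope.

Definition sumR (n : nat) (f : nat -> R) : R :=
  fold_right (fun i acc => f i + acc) 0 (seq 0 n).

Fixpoint minR (n : nat) (f : nat -> R) : R :=
  match n with
  | O => 0
  | S O => f O
  | S m => Rmin (minR m f) (f m)
  end.

Definition countN (n : nat) (p : nat -> bool) : nat :=
  length (filter p (seq 0 n)).

(** Infimum of a set of reals (0 if the set is empty or unbounded below). *)
Definition Rinf (E : R -> Prop) : R :=
  match excluded_middle_informative
          (bound (fun y => E (- y)) /\ exists y, E (- y)) with
  | left H => - proj1_sig (completeness _ (proj1 H) (proj2 H))
  | right _ => 0
  end.

(** Riemann integral of f over [a,b] (0 if f is not Riemann integrable). *)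
Definition RInt (f : R -> R) (a b : R) : R :=
  match excluded_middle_informative (inhabited (Riemann_integrable f a b)) with
  | left H => RiemannInt (epsilon H (fun _ => True))
  | right _ => 0
  end.

(** A network: vertices 0..nv-1, edges 0..ne-1, edge e joins src e and tgt e
    and has length len e. *)

Definition degree (ne : nat) (src tgt : nat -> nat) (v : nat) : nat :=
  countN ne (fun e => orb (Nat.eqb (src e) v) (Nat.eqb (tgt e) v)).

Inductive walk (ne : nat) (src tgt : nat -> nat) : nat -> nat -> list nat -> Prop :=
  | walk_nil : forall u, walk ne src tgt u u []
  | walk_cons : forall u u' v e w,
      (e < ne)%nat ->
      ((src e = u /\ tgt e = u') \/ (tgt e = u /\ src e = u')) ->
      walk ne src tgt u' v w ->
      walk ne src tgt u v (e :: w).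

Definition walk_length (len : nat -> R) (w : list nat) : R :=
  fold_right (fun e acc => len e + acc) 0 w.

(** A point of the metric graph S: (e, t) is the point at distance t from
    src e along edge e, with 0 <= t <= len e. *)
Definition point := (nat * R)%type.

Definition is_point (ne : nat) (len : nat -> R) (p : point) : Prop :=
  (fst p < ne)%nat /\ 0 <= snd p <= len (fst p).

Definition endpoint_dist (src tgt : nat -> nat) (len : nat -> R)
  (p : point) (a : nat) (r : R) : Prop :=
  (a = src (fst p) /\ r = snd p) \/ (a = tgt (fst p) /\ r = len (fst p) - snd p).

(** Shortest-path distance in S: infimum of lengths of paths in S from p to q;
    such a path either stays inside a common edge, or leaves the edge of p
    through an endpoint, follows a walk in the graph, and enters the edge of q
    through one of its endpoints. *)
Definition dist (ne : nat) (src tgt : nat -> nat) (len : nat -> R)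
  (p q : point) : R :=
  Rinf (fun l =>
    (fst p = fst q /\ l = Rabs (snd p - snd q)) \/
    exists a b r s w,
      endpoint_dist src tgt len p a r /\
      endpoint_dist src tgt len q b s /\
      walk ne src tgt a b w /\
      l = r + walk_length len w + s).

Definition social_cost (ne : nat) (src tgt : nat -> nat) (len : nat -> R)
  (n : nat) (x : nat -> point) : R :=
  sumR ne (fun e =>
    RInt (fun t => minR n (fun i => dist ne src tgt len (x i) (e, t))) 0 (len e)).

Definition card_EII (ne : nat) (src tgt : nat -> nat) : nat :=
  countN ne (fun e => andb (Nat.leb 3 (degree ne src tgt (src e)))
                           (Nat.leb 3 (degree ne src tgt (tgt e)))).

Definition card_EIL (ne : nat) (src tgt : nat -> nat) : nat :=
  countN ne (fun e =>
    orb (andb (Nat.leb 3 (degree ne src tgt (src e)))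
              (Nat.eqb (degree ne src tgt (tgt e)) 1))
        (andb (Nat.eqb (degree ne src tgt (src e)) 1)
              (Nat.leb 3 (degree ne src tgt (tgt e))))).

Definition total_length (ne : nat) (len : nat -> R) : R := sumR ne len.

(* Main.v *)
Require Import Defs.
From Stdlib Require Import Reals List.
Open Scope R_scope.
From Stdlib Require Import Lra Lia Classical ClassicalEpsilon.
From Coquelicot Require Coquelicot.
Require Import Defs.

Module OneD.
Import Coquelicot.Coquelicot.

Definition Lip (g : R -> R) := forall x y, Rabs (g x - g y) <= Rabs (x - y).

Lemma Lip_cont g : Lip g -> forall x, continuous g x.
Proof.
  intros H x. apply continuity_pt_filterlim.
  intros eps Heps. exists eps; split; [lra|].
  intros y [_ Hy]. simpl in *. unfold R_dist in *.
  eapply Rle_lt_trans; [apply H|]. exact Hy.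
Qed.

Lemma Lip_ex g a b : Lip g -> ex_RInt g a b.
Proof. intros H; apply (ex_RInt_continuous (V:=R_CompleteNormedModule)); intros; apply Lip_cont; auto. Qed.

Lemma int_lin u v : RInt (fun t => t - u) u v = (v - u)^2/2.
Proof.
  apply is_RInt_unique.
  assert (H := is_RInt_derive (V:=R_CompleteNormedModule) (fun t => (t-u)^2/2) (fun t => t - u) u v).
  replace ((v-u)^2/2) with (minus ((fun t => (t-u)^2/2) v) ((fun t => (t-u)^2/2) u)).
  2:{ unfold minus, plus, opp; simpl. field. }
  apply H.
  - intros x _. auto_derive; auto. field.
  - intros x _. apply continuity_pt_filterlim. apply continuity_pt_minus.
    apply continuity_pt_id. apply continuity_pt_const. intros a b; auto.
Qed.

Lemma int_lin' u v : RInt (fun t => v - t) u v = (v - u)^2/2.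
Proof.
  apply is_RInt_unique.
  assert (H := is_RInt_derive (V:=R_CompleteNormedModule) (fun t => - (v-t)^2/2) (fun t => v - t) u v).
  replace ((v-u)^2/2) with (minus ((fun t => - (v-t)^2/2) v) ((fun t => - (v-t)^2/2) u)).
  2:{ unfold minus, plus, opp; simpl. field. }
  apply H.
  - intros x _. auto_derive; auto. field.
  - intros x _. apply continuity_pt_filterlim. apply continuity_pt_minus.
    apply continuity_pt_const. intros a b; auto. apply continuity_pt_id.
Qed.

Lemma ex_lin u a b : ex_RInt (fun t => t - u) a b.
Proof. apply (ex_RInt_continuous (V:=R_CompleteNormedModule)); intros. apply continuity_pt_filterlim. apply continuity_pt_minus.
    apply continuity_pt_id. apply continuity_pt_const. intros x y; auto. Qed.
Lemma ex_lin' v a b : ex_RInt (fun t => v - t) a b.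
Proof. apply (ex_RInt_continuous (V:=R_CompleteNormedModule)); intros. apply continuity_pt_filterlim. apply continuity_pt_minus.
    apply continuity_pt_const. intros x y; auto. apply continuity_pt_id. Qed.

Lemma lemB g u v : Lip g -> u <= v -> (forall t, u <= t <= v -> t - u <= g t) ->
  (v-u)^2/2 <= RInt g u v.
Proof.
  intros Hg Huv H. rewrite <- int_lin. apply RInt_le; auto.
  apply ex_lin. apply Lip_ex; auto. intros; apply H; lra.
Qed.
Lemma lemB' g u v : Lip g -> u <= v -> (forall t, u <= t <= v -> v - t <= g t) ->
  (v-u)^2/2 <= RInt g u v.
Proof.
  intros Hg Huv H. rewrite <- int_lin'. apply RInt_le; auto.
  apply ex_lin'. apply Lip_ex; auto. intros; apply H; lra.
Qed.

Lemma chasles g a b c : Lip g -> RInt g a b + RInt g b c = RInt g a c.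
Proof. intros H. rewrite <- (RInt_Chasles (V:=R_CompleteNormedModule) g a b c); try apply Lip_ex; auto. Qed.

Definition b2r (b : bool) : R := if b then 1 else 0.

Definition Bnd (g : R -> R) u v (cu cv : bool) (S : list R) :=
  forall t, u <= t <= v ->
    (cu = true /\ t - u <= g t) \/ (cv = true /\ v - t <= g t) \/
    (exists s, In s S /\ Rabs (t - s) <= g t).

Lemma cs2 x y a b : 0 < a -> 0 < b -> (x+y)^2/(a+b) <= x^2/a + y^2/b.
Proof.
  intros Ha Hb.
  assert (E: x^2/a + y^2/b - (x+y)^2/(a+b) = (x*b - y*a)^2/(a*b*(a+b))) by (field; lra).
  assert (0 <= (x*b - y*a)^2/(a*b*(a+b))).
  { apply Rmult_le_pos. apply pow2_ge_0. left; apply Rinv_0_lt_compat.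
    apply Rmult_lt_0_compat; [apply Rmult_lt_0_compat|]; lra. }
  lra.
Qed.

Definition leb_s (s x : R) : bool := if Rle_dec x s then true else false.

Lemma filter_len {A} (p : A -> bool) l :
  (length (filter p l) + length (filter (fun x => negb (p x)) l) = length l)%nat.
Proof. induction l; simpl; auto. destruct (p a); simpl; lia. Qed.

Lemma main1D g (Hg : Lip g) : forall N S u v cu cv, (length S <= N)%nat -> u <= v ->
  (forall s, In s S -> u <= s <= v) -> Bnd g u v cu cv S ->
  0 < 2 * INR (length S) + b2r cu + b2r cv ->
  (v-u)^2 / (2 * (2 * INR (length S) + b2r cu + b2r cv)) <= RInt g u v.
Proof.
  induction N as [|N IH]; intros S u v cu cv HN Huv HS HB Hw.
  - destruct S; [|simpl in HN; lia].
    cbn [length INR] in *. destruct cu, cv; unfold b2r in *.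
    + set (m := (u+v)/2). rewrite <- (chasles g u m v Hg).
      assert (H1 := lemB g u m Hg ltac:(unfold m; lra)).
      assert (H2 := lemB' g m v Hg ltac:(unfold m; lra)).
      assert ((m-u)^2/2 <= RInt g u m).
      { apply H1. intros t Ht. destruct (HB t ltac:(unfold m in *; lra)) as [[_ H0]|[[_ H0]|[s [[] _]]]];
        unfold m in *; lra. }
      assert ((v-m)^2/2 <= RInt g m v).
      { apply H2. intros t Ht. destruct (HB t ltac:(unfold m in *; lra)) as [[_ H0]|[[_ H0]|[s [[] _]]]];
        unfold m in *; lra. }
      replace ((v - u) ^ 2 / (2 * (2 * 0 + 1 + 1))) with ((m-u)^2/2 + (v-m)^2/2) by (unfold m; field).
      lra.
    + replace ((v - u) ^ 2 / (2 * (2 * 0 + 1 + 0))) with ((v-u)^2/2) by field.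
      apply lemB; auto. intros t Ht. destruct (HB t Ht) as [[_ H0]|[[H0 _]|[s [[] _]]]]; auto; discriminate.
    + replace ((v - u) ^ 2 / (2 * (2 * 0 + 0 + 1))) with ((v-u)^2/2) by field.
      apply lemB'; auto. intros t Ht. destruct (HB t Ht) as [[H0 _]|[[_ H0]|[s [[] _]]]]; auto; discriminate.
    + lra.
  - destruct S as [|s S'].
    + apply (IH nil u v cu cv); simpl; auto; lia.
    + set (SL := filter (leb_s s) S').
      set (SR := filter (fun x => negb (leb_s s x)) S').
      assert (Hlen := filter_len (leb_s s) S'). fold SL SR in Hlen.
      assert (Hs : u <= s <= v) by (apply HS; left; auto).
      assert (Hb1 : 0 <= b2r cu) by (destruct cu; simpl; lra).
      assert (Hb2 : 0 <= b2r cv) by (destruct cv; simpl; lra).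
      assert (HL0 : 0 <= INR (length SL)) by apply pos_INR.
      assert (HR0 : 0 <= INR (length SR)) by apply pos_INR.
      assert (IL := IH SL u s cu true ltac:(simpl in HN; lia) ltac:(lra)).
      assert (IR := IH SR s v true cv ltac:(simpl in HN; lia) ltac:(lra)).
      simpl b2r in IL, IR.
      assert (A1 : (s-u)^2/(2*(2*INR (length SL) + b2r cu + 1)) <= RInt g u s).
      { apply IL; [| |lra].
        - intros x Hx. unfold SL in Hx. apply filter_In in Hx as [Hx Hx'].
          unfold leb_s in Hx'. destruct (Rle_dec x s); [|discriminate].
          assert (u <= x <= v) by (apply HS; right; auto). lra.
        - intros t Ht. destruct (HB t ltac:(lra)) as [[H1 H]|[[_ H]|[s0 [Hs0 H]]]].
          + left; auto.
          + right; left; split; auto; lra.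
          + destruct Hs0 as [<-|Hs0].
            * right; left; split; auto. rewrite Rabs_left1 in H; lra.
            * destruct (Rle_dec s0 s) as [Hle|Hgt].
              -- right; right. exists s0; split; auto. unfold SL. apply filter_In; split; auto.
                 unfold leb_s. destruct (Rle_dec s0 s); auto; contradiction.
              -- right; left; split; auto. rewrite Rabs_left1 in H; lra. }
      assert (A2 : (v-s)^2/(2*(2*INR (length SR) + 1 + b2r cv)) <= RInt g s v).
      { apply IR; [| |lra].
        - intros x Hx. unfold SR in Hx. apply filter_In in Hx as [Hx Hx'].
          unfold leb_s in Hx'. destruct (Rle_dec x s); [discriminate|].
          assert (u <= x <= v) by (apply HS; right; auto). lra.
        - intros t Ht. destruct (HB t ltac:(lra)) as [[H1 H]|[[H1 H]|[s0 [Hs0 H]]]].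
          + left; split; auto; lra.
          + right; left; auto.
          + destruct Hs0 as [<-|Hs0].
            * left; split; auto. rewrite Rabs_right in H; lra.
            * destruct (Rle_dec s0 s) as [Hle|Hgt].
              -- left; split; auto. rewrite Rabs_right in H; lra.
              -- right; right. exists s0; split; auto. unfold SR. apply filter_In; split; auto.
                 unfold leb_s. destruct (Rle_dec s0 s); auto; contradiction. }
      rewrite <- (chasles g u s v Hg).
      assert (E : INR (length (s :: S')) = 1 + INR (length SL) + INR (length SR)).
      { simpl length. rewrite S_INR, <- Hlen, plus_INR. ring. }
      rewrite E.
      assert (C := cs2 (s-u) (v-s) (2*(2*INR (length SL) + b2r cu + 1))
                       (2*(2*INR (length SR) + 1 + b2r cv)) ltac:(lra) ltac:(lra)).
      replace (s - u + (v - s)) with (v - u) in C by ring.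
      replace (2 * (2 * INR (length SL) + b2r cu + 1) + 2 * (2 * INR (length SR) + 1 + b2r cv))
        with (2 * (2 * (1 + INR (length SL) + INR (length SR)) + b2r cu + b2r cv)) in C by ring.
      lra.
Qed.

End OneD.


Lemma fold_shift (f : nat -> R) l c :
  fold_right (fun i acc => f i + acc) c l = fold_right (fun i acc => f i + acc) 0 l + c.
Proof. induction l; simpl; [ring|rewrite IHl; ring]. Qed.

Lemma sumR_S k f : sumR (S k) f = sumR k f + f k.
Proof. unfold sumR. rewrite seq_S, fold_right_app. simpl. rewrite fold_shift. ring. Qed.

Lemma sumR_0 f : sumR 0 f = 0.
Proof. reflexivity. Qed.

Lemma countN_S k p : countN (S k) p = (countN k p + (if p k then 1 else 0))%nat.
Proof. unfold countN. rewrite seq_S, filter_app, length_app. simpl. destruct (p k); simpl; lia. Qed.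

Lemma sumR_le k f g : (forall e, (e < k)%nat -> f e <= g e) -> sumR k f <= sumR k g.
Proof. induction k; intros H. rewrite !sumR_0; lra. rewrite !sumR_S.
  assert (f k <= g k) by (apply H; lia). assert (sumR k f <= sumR k g) by (apply IHk; intros; apply H; lia). lra. Qed.

Lemma sumR_ext k f g : (forall e, (e < k)%nat -> f e = g e) -> sumR k f = sumR k g.
Proof. induction k; intros H. reflexivity. rewrite !sumR_S. rewrite H, IHk; auto. Qed.

Lemma sumR_plus k f g : sumR k (fun e => f e + g e) = sumR k f + sumR k g.
Proof. induction k. rewrite !sumR_0; ring. rewrite !sumR_S, IHk; ring. Qed.

Lemma sumR_scal k c f : sumR k (fun e => c * f e) = c * sumR k f.
Proof. induction k. rewrite !sumR_0; ring. rewrite !sumR_S, IHk; ring. Qed.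

Lemma sumR_pos k w : (1 <= k)%nat -> (forall e, (e < k)%nat -> 0 < w e) -> 0 < sumR k w.
Proof. induction k; intros Hk H. lia. rewrite sumR_S. destruct k. rewrite sumR_0. assert (0 < w 0%nat) by (apply H; lia). lra.
  assert (0 < sumR (S k) w) by (apply IHk; [lia|intros; apply H; lia]). assert (0 < w (S k)) by (apply H; lia). lra. Qed.

Lemma cs2 x y a b : 0 < a -> 0 < b -> (x+y)^2/(a+b) <= x^2/a + y^2/b.
Proof.
  intros Ha Hb.
  assert (E: x^2/a + y^2/b - (x+y)^2/(a+b) = (x*b - y*a)^2/(a*b*(a+b))) by (field; lra).
  assert (0 <= (x*b - y*a)^2/(a*b*(a+b))).
  { apply Rmult_le_pos. apply pow2_ge_0. left; apply Rinv_0_lt_compat.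
    apply Rmult_lt_0_compat; [apply Rmult_lt_0_compat|]; lra. }
  lra.
Qed.

Lemma sumR_CS k x w : (forall e, (e < k)%nat -> 0 < w e) ->
  (sumR k x)^2 / sumR k w <= sumR k (fun e => x e ^2 / w e).
Proof.
  induction k; intros H.
  - rewrite !sumR_0. unfold Rdiv. rewrite pow_i by lia. lra.
  - rewrite !sumR_S. destruct k.
    + rewrite !sumR_0, !Rplus_0_l. lra.
    + assert (0 < sumR (S k) w) by (apply sumR_pos; [lia|intros; apply H; lia]).
      assert (0 < w (S k)) by (apply H; lia).
      assert (IH := IHk ltac:(intros; apply H; lia)).
      assert (C := cs2 (sumR (S k) x) (x (S k)) (sumR (S k) w) (w (S k)) H0 H1). lra.
Qed.

Lemma INR_countN k p : INR (countN k p) = sumR k (fun e => if p e then 1 else 0).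
Proof. induction k. reflexivity. rewrite countN_S, sumR_S, plus_INR, IHk. destruct (p k); simpl; ring. Qed.

Lemma Rinf_le (E : R -> Prop) l : E l -> (exists M, forall y, E y -> M <= y) -> Rinf E <= l.
Proof.
  intros Hl [M HM]. unfold Rinf.
  destruct excluded_middle_informative as [H|H].
  - destruct (completeness _ _ _) as [sp [Hub Hlub]]. simpl.
    assert (- l <= sp) by (apply Hub; rewrite Ropp_involutive; auto). lra.
  - exfalso; apply H. split. exists (-M). intros y Hy. apply HM in Hy. lra.
    exists (-l). rewrite Ropp_involutive; auto.
Qed.

Lemma Rinf_ge (E : R -> Prop) m : (exists l, E l) -> (exists M, forall y, E y -> M <= y) ->
  (forall y, E y -> m <= y) -> m <= Rinf E.
Proof.
  intros [l Hl] [M HM] Hm. unfold Rinf.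
  destruct excluded_middle_informative as [H|H].
  - destruct (completeness _ _ _) as [sp [Hub Hlub]]. simpl.
    assert (sp <= - m). { apply Hlub. intros y Hy. apply Hm in Hy. lra. } lra.
  - exfalso; apply H. split. exists (-M). intros y Hy. apply HM in Hy. lra.
    exists (-l). rewrite Ropp_involutive; auto.
Qed.

Lemma Rinf_approx (E : R -> Prop) eps : (exists l, E l) -> (exists M, forall y, E y -> M <= y) ->
  0 < eps -> exists l, E l /\ l < Rinf E + eps.
Proof.
  intros Hne Hb Heps. apply NNPP. intros Hn.
  assert (Rinf E + eps <= Rinf E). { apply Rinf_ge; auto. intros y Hy.
    apply Rnot_lt_le. intros Hlt. apply Hn. exists y; auto. } lra.
Qed.

Lemma Rinf_opts (E : R -> Prop) (P1 P2 P3 : Prop) v1 v2 v3 :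
  (exists l, E l) -> (exists M, forall y, E y -> M <= y) ->
  (forall l, E l -> (P1 /\ v1 <= l) \/ (P2 /\ v2 <= l) \/ (P3 /\ v3 <= l)) ->
  (P1 /\ v1 <= Rinf E) \/ (P2 /\ v2 <= Rinf E) \/ (P3 /\ v3 <= Rinf E).
Proof.
  intros Hne Hb H. apply NNPP; intros Hn.
  set (I := Rinf E).
  set (e1 := if excluded_middle_informative P1 then v1 - I else 1).
  set (e2 := if excluded_middle_informative P2 then v2 - I else 1).
  set (e3 := if excluded_middle_informative P3 then v3 - I else 1).
  assert (H1 : 0 < e1). { unfold e1; destruct (excluded_middle_informative P1); [|lra].
    apply Rnot_le_lt. intros Hc. apply Hn. left; split; auto. fold I; lra. }
  assert (H2 : 0 < e2). { unfold e2; destruct (excluded_middle_informative P2); [|lra].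
    apply Rnot_le_lt. intros Hc. apply Hn. right; left; split; auto. fold I; lra. }
  assert (H3 : 0 < e3). { unfold e3; destruct (excluded_middle_informative P3); [|lra].
    apply Rnot_le_lt. intros Hc. apply Hn. right; right; split; auto. fold I; lra. }
  destruct (Rinf_approx E (Rmin e1 (Rmin e2 e3)) Hne Hb) as [l [Hl Hlt]].
  { apply Rmin_pos; auto. apply Rmin_pos; auto. }
  fold I in Hlt.
  assert (Rmin e1 (Rmin e2 e3) <= e1) by apply Rmin_l.
  assert (Rmin e2 e3 <= e2) by apply Rmin_l.
  assert (Rmin e2 e3 <= e3) by apply Rmin_r.
  assert (Rmin e1 (Rmin e2 e3) <= Rmin e2 e3) by apply Rmin_r.
  destruct (H l Hl) as [[Q1 W]|[[Q2 W]|[Q3 W]]].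
  - unfold e1 in *; destruct (excluded_middle_informative P1); [lra|contradiction].
  - unfold e2 in *; destruct (excluded_middle_informative P2); [lra|contradiction].
  - unfold e3 in *; destruct (excluded_middle_informative P3); [lra|contradiction].
Qed.

Lemma minR_arg n f : (1 <= n)%nat -> exists i, (i < n)%nat /\ minR n f = f i.
Proof.
  induction n; intros Hn. lia. destruct n.
  - exists 0%nat; split; auto.
  - destruct (IHn ltac:(lia)) as [i [Hi E]].
    change (minR (S (S n)) f) with (Rmin (minR (S n) f) (f (S n))).
    unfold Rmin; destruct Rle_dec.
    + exists i; split; auto.
    + exists (S n); split; auto.
Qed.

Lemma Rmin_lip a b c d del : Rabs (a - c) <= del -> Rabs (b - d) <= del ->
  Rabs (Rmin a b - Rmin c d) <= del.
Proof.
  intros H1 H2. apply Rabs_le. revert H1 H2. unfold Rabs; destruct Rcase_abs, Rcase_abs;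
  unfold Rmin; destruct Rle_dec, Rle_dec; intros; lra.
Qed.


Definition inc (src tgt : nat -> nat) e v := src e = v \/ tgt e = v.

Lemma deg_in ne src tgt e v : (e < ne)%nat -> inc src tgt e v ->
  In e (filter (fun e => orb (Nat.eqb (src e) v) (Nat.eqb (tgt e) v)) (seq 0 ne)).
Proof.
  intros He Hi. apply filter_In. split. apply in_seq; lia.
  destruct Hi as [H|H]; rewrite H, Nat.eqb_refl; auto using Bool.orb_true_r.
Qed.

Lemma deg_ge1 ne src tgt e v : (e < ne)%nat -> inc src tgt e v -> (1 <= degree ne src tgt v)%nat.
Proof.
  intros He Hi. unfold degree, countN. assert (H := deg_in ne src tgt e v He Hi).
  destruct (filter _ _); [destruct H|simpl; lia].
Qed.

Lemma leaf_unique ne src tgt v e e' : degree ne src tgt v = 1%nat -> (e < ne)%nat -> (e' < ne)%nat ->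
  inc src tgt e v -> inc src tgt e' v -> e = e'.
Proof.
  intros Hd He He' Hi Hi'. destruct (Nat.eq_dec e e') as [|Hn]; auto. exfalso.
  unfold degree, countN in Hd.
  assert (ND : NoDup (filter (fun e => orb (Nat.eqb (src e) v) (Nat.eqb (tgt e) v)) (seq 0 ne))).
  { apply NoDup_filter, seq_NoDup. }
  assert (Hl := NoDup_incl_length (l := e :: e' :: nil) (l' := filter (fun e => orb (Nat.eqb (src e) v) (Nat.eqb (tgt e) v)) (seq 0 ne))).
  simpl in Hl. rewrite Hd in Hl.
  assert (2 <= 1)%nat; [|lia]. apply Hl.
  - constructor. simpl; intros [H|[]]; auto. constructor. simpl; auto. constructor.
  - intros y [<-|[<-|[]]]; apply deg_in; auto.
Qed.

Lemma walk_edges ne src tgt u v w : walk ne src tgt u v w -> forall e, In e w -> (e < ne)%nat.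
Proof. induction 1; simpl; intros e0 H'; [contradiction|destruct H' as [<-|H']; auto]. Qed.

Lemma wl_ge0 ne src tgt (len : nat -> R) u v w : (forall e, (e < ne)%nat -> 0 < len e) ->
  walk ne src tgt u v w -> 0 <= walk_length len w.
Proof. intros Hl; induction 1; simpl. lra. assert (0 < len e) by auto. lra. Qed.

Lemma wl_In ne src tgt (len : nat -> R) u v w e : (forall e, (e < ne)%nat -> 0 < len e) ->
  walk ne src tgt u v w -> In e w -> len e <= walk_length len w.
Proof.
  intros Hl; induction 1; simpl. intros []. intros [<-|Hi].
  - assert (0 <= walk_length len w) by (eapply wl_ge0; eauto). lra.
  - assert (0 < len e0) by auto. assert (len e <= walk_length len w) by auto. lra.
Qed.

Lemma walk_leaf ne src tgt u v w e : walk ne src tgt u v w -> w <> nil ->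
  degree ne src tgt v = 1%nat -> (e < ne)%nat -> inc src tgt e v -> In e w.
Proof.
  induction 1 as [u|u u' v e1 w He1 Hinc Hw IH]; intros Hnil Hd He Hi. contradiction.
  destruct w as [|e2 w].
  - inversion Hw; subst. left. eapply leaf_unique; eauto. unfold inc. tauto.
  - right. apply IH; auto. discriminate.
Qed.

Lemma walk_trapped ne src tgt u v w e : degree ne src tgt (src e) = 1%nat ->
  degree ne src tgt (tgt e) = 1%nat -> (e < ne)%nat ->
  walk ne src tgt u v w -> inc src tgt e u -> inc src tgt e v.
Proof.
  intros H1 H2 He. induction 1 as [u|u u' v e1 w He1 Hinc Hw IH]; auto.
  intros Hu. apply IH.
  assert (Hdu : degree ne src tgt u = 1%nat) by (destruct Hu as [<-|<-]; auto).
  assert (e1 = e). { eapply leaf_unique; eauto. unfold inc; tauto. } subst e1.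
  unfold inc; tauto.
Qed.

Lemma both_leaves_all nv ne src tgt e e'
  (Hends : forall e, (e < ne)%nat -> (src e < nv)%nat /\ (tgt e < nv)%nat)
  (Hconn : forall u v, (u < nv)%nat -> (v < nv)%nat -> exists w, walk ne src tgt u v w) :
  degree ne src tgt (src e) = 1%nat -> degree ne src tgt (tgt e) = 1%nat ->
  (e < ne)%nat -> (e' < ne)%nat -> e' = e.
Proof.
  intros H1 H2 He He'.
  destruct (Hconn (src e) (src e')) as [w Hw]; [apply Hends; auto|apply Hends; auto|].
  assert (Hi : inc src tgt e (src e')). { eapply walk_trapped; eauto. left; auto. }
  assert (Hd : degree ne src tgt (src e') = 1%nat) by (destruct Hi as [<-|<-]; auto).
  eapply leaf_unique; eauto. left; auto.
Qed.


Definition DS (ne : nat) (src tgt : nat -> nat) (len : nat -> R) (p q : point) : R -> Prop :=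
  fun l =>
    (fst p = fst q /\ l = Rabs (snd p - snd q)) \/
    exists a b r s w,
      endpoint_dist src tgt len p a r /\
      endpoint_dist src tgt len q b s /\
      walk ne src tgt a b w /\
      l = r + walk_length len w + s.

Lemma dist_DS ne src tgt len p q : dist ne src tgt len p q = Rinf (DS ne src tgt len p q).
Proof. reflexivity. Qed.

Lemma abs_bounds x : -Rabs x <= x <= Rabs x.
Proof. unfold Rabs; destruct Rcase_abs; lra. Qed.

Lemma r_ge0 ne src tgt (len : nat -> R) p a r : is_point ne len p -> endpoint_dist src tgt len p a r -> 0 <= r.
Proof. intros [_ H] [[_ ->]|[_ ->]]; lra. Qed.

Lemma DS_bounded ne src tgt len p e t : (forall e, (e < ne)%nat -> 0 < len e) -> is_point ne len p ->
  exists M, forall y, DS ne src tgt len p (e, t) y -> M <= y.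
Proof.
  intros Hl Hp. exists (-(Rabs t + Rabs (len e))). intros y [[_ ->]|[a [b [r [s [w [H1 [H2 [H3 ->]]]]]]]]].
  - assert (0 <= Rabs (snd p - snd (e,t))) by apply Rabs_pos.
    assert (0 <= Rabs t) by apply Rabs_pos. assert (0 <= Rabs (len e)) by apply Rabs_pos. lra.
  - assert (0 <= r) by (eapply r_ge0; eauto).
    assert (0 <= walk_length len w) by (eapply wl_ge0; eauto).
    assert (A1 := abs_bounds t). assert (A2 := abs_bounds (len e)).
    destruct H2 as [[_ ->]|[_ ->]]; simpl; lra.
Qed.

Lemma DS_ne nv ne src tgt len p e t
  (Hends : forall e, (e < ne)%nat -> (src e < nv)%nat /\ (tgt e < nv)%nat)
  (Hconn : forall u v, (u < nv)%nat -> (v < nv)%nat -> exists w, walk ne src tgt u v w) :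
  is_point ne len p -> (e < ne)%nat -> exists l, DS ne src tgt len p (e, t) l.
Proof.
  intros [Hp _] He. destruct (Hconn (src (fst p)) (src e)) as [w Hw]; [apply Hends; auto|apply Hends; auto|].
  eexists. right. exists (src (fst p)), (src e), (snd p), t, w. repeat split; auto.
  left; auto. left; auto.
Qed.

Lemma dist_lip nv ne src tgt len p e
  (Hends : forall e, (e < ne)%nat -> (src e < nv)%nat /\ (tgt e < nv)%nat)
  (Hconn : forall u v, (u < nv)%nat -> (v < nv)%nat -> exists w, walk ne src tgt u v w)
  (Hlen : forall e, (e < ne)%nat -> 0 < len e) :
  is_point ne len p -> (e < ne)%nat -> OneD.Lip (fun t => dist ne src tgt len p (e, t)).
Proof.
  intros Hp He.
  assert (K : forall t1 t2, dist ne src tgt len p (e, t2) <= dist ne src tgt len p (e, t1) + Rabs (t1 - t2)).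
  { intros t1 t2. rewrite !dist_DS.
    assert (Rinf (DS ne src tgt len p (e, t2)) - Rabs (t1 - t2) <= Rinf (DS ne src tgt len p (e, t1))); [|lra].
    apply Rinf_ge. eapply DS_ne; eauto. apply DS_bounded; auto.
    intros y Hy.
    assert (exists y', DS ne src tgt len p (e, t2) y' /\ y' <= y + Rabs (t1 - t2)) as [y' [Hy' Hle]].
    { destruct Hy as [[Hf ->]|[a [b [r [s [w [H1 [H2 [H3 ->]]]]]]]]].
      - exists (Rabs (snd p - t2)). split. left; split; auto.
        simpl. replace (snd p - t2) with ((snd p - t1) + (t1 - t2)) by ring. apply Rabs_triang.
      - destruct H2 as [[Hb ->]|[Hb ->]]; simpl in Hb |- *.
        + exists (r + walk_length len w + t2). split.
          * right. exists a, b, r, t2, w. repeat split; auto. left; auto.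
          * assert (A := abs_bounds (t1 - t2)). lra.
        + exists (r + walk_length len w + (len e - t2)). split.
          * right. exists a, b, r, (len e - t2), w. repeat split; auto. right; auto.
          * assert (A := abs_bounds (t1 - t2)). lra. }
    assert (Rinf (DS ne src tgt len p (e, t2)) <= y').
    { apply Rinf_le; auto. apply DS_bounded; auto. }
    lra. }
  intros t1 t2. apply Rabs_le. assert (K1 := K t1 t2). assert (K2 := K t2 t1).
  rewrite Rabs_minus_sym in K2. lra.
Qed.

Lemma minR_lip n (f : nat -> R -> R) : (forall i, (i < n)%nat -> OneD.Lip (f i)) ->
  OneD.Lip (fun t => minR n (fun i => f i t)).
Proof.
  induction n; intros H.
  - intros x y; simpl. rewrite Rminus_0_r, Rabs_R0. apply Rabs_pos.
  - destruct n.
    + intros x y; simpl. apply H; lia.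
    + intros x y. change (Rabs (Rmin (minR (S n) (fun i => f i x)) (f (S n) x) -
                             Rmin (minR (S n) (fun i => f i y)) (f (S n) y)) <= Rabs (x - y)).
      apply Rmin_lip. apply IHn; auto. apply H; lia.
Qed.

Lemma RInt_coq g a b : OneD.Lip g -> a <= b -> RInt g a b = Coquelicot.RInt.RInt (V:=Coquelicot.Hierarchy.R_CompleteNormedModule) g a b.
Proof.
  intros Hg Hab.
  assert (pr : Riemann_integrable g a b).
  { apply continuity_implies_RiemannInt; auto. intros x _.
    intros eps Heps. exists eps; split; [lra|]. intros y [_ Hy]. simpl in *. unfold R_dist in *.
    eapply Rle_lt_trans; [apply Hg|]. exact Hy. }
  rewrite (Coquelicot.RInt.RInt_Reals g a b pr).
  unfold RInt. destruct excluded_middle_informative as [H|H].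
  - apply RiemannInt_P5.
  - exfalso; apply H; constructor; auto.
Qed.


Definition gE ne src tgt len n (x : nat -> point) e : R -> R :=
  fun t => minR n (fun i => dist ne src tgt len (x i) (e, t)).
Definition SE n (x : nat -> point) e : list R :=
  map (fun i => snd (x i)) (filter (fun i => Nat.eqb (fst (x i)) e) (seq 0 n)).
Definition cE ne src tgt v : bool := negb (Nat.eqb (degree ne src tgt v) 1).

Lemma abs_sum a b : 0 <= a -> 0 <= b -> Rabs (a - b) <= a + b.
Proof. intros; unfold Rabs; destruct Rcase_abs; lra. Qed.
Lemma abs_in a b L : 0 <= a <= L -> 0 <= b <= L -> Rabs (a - b) <= L.
Proof. intros; unfold Rabs; destruct Rcase_abs; lra. Qed.

Lemma edge_bnd nv ne src tgt len
  (Hends : forall e, (e < ne)%nat -> (src e < nv)%nat /\ (tgt e < nv)%nat)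
  (Hloop : forall e, (e < ne)%nat -> src e <> tgt e)
  (Hlen : forall e, (e < ne)%nat -> 0 < len e)
  (Hconn : forall u v, (u < nv)%nat -> (v < nv)%nat -> exists w, walk ne src tgt u v w)
  n (Hn : (1 <= n)%nat) (x : nat -> point)
  (Hx : forall i, (i < n)%nat -> is_point ne len (x i)) e (He : (e < ne)%nat) :
  OneD.Bnd (gE ne src tgt len n x e) 0 (len e) (cE ne src tgt (src e)) (cE ne src tgt (tgt e)) (SE n x e).
Proof.
  intros t Ht. unfold gE. destruct (minR_arg n (fun i => dist ne src tgt len (x i) (e, t)) Hn) as [i [Hi Eq]].
  rewrite Eq. clear Eq. assert (Hp := Hx i Hi). set (p := x i) in *.
  rewrite dist_DS.
  assert (Key : forall l, DS ne src tgt len p (e, t) l -> (cE ne src tgt (src e) = true /\ t - 0 <= l) \/ (cE ne src tgt (tgt e) = true /\ len e - t <= l) \/ (fst p = e /\ Rabs (t - snd p) <= l)).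
  { clear Hi.
  assert (Hpe := proj1 Hp). assert (Hsp := proj2 Hp).
  intros l Hl. destruct Hl as [[Hf ->]|[a [b [r [s [w [H1 [H2 [H3 ->]]]]]]]]].
  - right; right. split; auto. simpl. rewrite Rabs_minus_sym. lra.
  - assert (Hr : 0 <= r) by (eapply r_ge0; eauto).
    assert (Hw : 0 <= walk_length len w) by (eapply wl_ge0; eauto).
    unfold cE. destruct H2 as [[Hb Hs]|[Hb Hs]]; simpl in Hb, Hs; subst b s.
    + destruct (Nat.eqb (degree ne src tgt (src e)) 1) eqn:D1; cbn [negb].
      2: { left; split; auto. lra. }
      apply Nat.eqb_eq in D1. destruct w as [|e1 w'].
      * assert (Ha : a = src e) by (inversion H3; auto). subst a.
        assert (Hee : fst p = e).
        { eapply leaf_unique; eauto. unfold inc. destruct H1 as [[? _]|[? _]]; auto. left; auto. }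
        right; right; split; auto. destruct H1 as [[_ ->]|[Ht' _]].
        -- simpl. assert (Q := abs_sum t (snd p) ltac:(lra) ltac:(lra)). lra.
        -- exfalso. rewrite Hee in Ht'. apply (Hloop e He); auto.
      * assert (Hin : In e (e1 :: w')) by (eapply walk_leaf; eauto; [discriminate|left; auto]).
        assert (HL : len e <= walk_length len (e1 :: w')) by (eapply wl_In; eauto).
        destruct (Nat.eqb (degree ne src tgt (tgt e)) 1) eqn:D2; cbn [negb].
        -- apply Nat.eqb_eq in D2. assert (Hee : fst p = e) by (eapply both_leaves_all; eauto).
           right; right; split; auto. rewrite Hee in Hsp.
           assert (Q := abs_sum t (snd p) ltac:(lra) ltac:(lra)). lra.
        -- right; left; split; auto. lra.
    + destruct (Nat.eqb (degree ne src tgt (tgt e)) 1) eqn:D2; cbn [negb].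
      2: { right; left; split; auto. lra. }
      apply Nat.eqb_eq in D2. destruct w as [|e1 w'].
      * assert (Ha : a = tgt e) by (inversion H3; auto). subst a.
        assert (Hee : fst p = e).
        { eapply leaf_unique; eauto. unfold inc. destruct H1 as [[? _]|[? _]]; auto. right; auto. }
        right; right; split; auto. destruct H1 as [[Ht' _]|[_ ->]].
        -- exfalso. rewrite Hee in Ht'. apply (Hloop e He); auto.
        -- simpl. rewrite Hee in *. assert (Q := abs_in t (snd p) (len e) ltac:(lra) ltac:(lra)).
           unfold Rabs in *; destruct Rcase_abs; lra.
      * assert (Hin : In e (e1 :: w')) by (eapply walk_leaf; eauto; [discriminate|right; auto]).
        assert (HL : len e <= walk_length len (e1 :: w')) by (eapply wl_In; eauto).
        destruct (Nat.eqb (degree ne src tgt (src e)) 1) eqn:D1; cbn [negb].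
        -- apply Nat.eqb_eq in D1. assert (Hee : fst p = e) by (eapply both_leaves_all; eauto).
           right; right; split; auto. rewrite Hee in Hsp.
           assert (Q := abs_in t (snd p) (len e) ltac:(lra) ltac:(lra)). lra.
        -- left; split; auto. lra.
  }
  destruct (Rinf_opts (DS ne src tgt len p (e, t))
     (cE ne src tgt (src e) = true) (cE ne src tgt (tgt e) = true) (fst p = e)
     (t - 0) (len e - t) (Rabs (t - snd p))
     ltac:(eapply DS_ne; eauto) ltac:(apply DS_bounded; auto) Key) as [R|[R|[Hf R]]].
  { left; auto. }
  { right; left; auto. }
  { right; right. exists (snd p). split; auto. unfold SE. apply in_map_iff. exists i. split; auto.
       apply filter_In. split. apply in_seq; lia. apply Nat.eqb_eq; auto. }
Qed.


Lemma len_SE n x e : length (SE n x e) = countN n (fun i => Nat.eqb (fst (x i)) e).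
Proof. unfold SE, countN. apply length_map. Qed.

Lemma edge_int nv ne src tgt len
  (Hends : forall e, (e < ne)%nat -> (src e < nv)%nat /\ (tgt e < nv)%nat)
  (Hloop : forall e, (e < ne)%nat -> src e <> tgt e)
  (Hlen : forall e, (e < ne)%nat -> 0 < len e)
  (Hconn : forall u v, (u < nv)%nat -> (v < nv)%nat -> exists w, walk ne src tgt u v w)
  n (Hn : (1 <= n)%nat) (x : nat -> point)
  (Hx : forall i, (i < n)%nat -> is_point ne len (x i)) e (He : (e < ne)%nat) :
  0 < 2 * INR (length (SE n x e)) + OneD.b2r (cE ne src tgt (src e)) + OneD.b2r (cE ne src tgt (tgt e)) /\
  (len e)^2 / (2 * (2 * INR (length (SE n x e)) + OneD.b2r (cE ne src tgt (src e)) + OneD.b2r (cE ne src tgt (tgt e))))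
   <= RInt (gE ne src tgt len n x e) 0 (len e).
Proof.
  assert (Hlip : OneD.Lip (gE ne src tgt len n x e)).
  { unfold gE. apply (minR_lip n (fun i t => dist ne src tgt len (x i) (e, t))).
    intros i Hi. eapply dist_lip; eauto. }
  assert (Hpos : 0 < 2 * INR (length (SE n x e)) + OneD.b2r (cE ne src tgt (src e)) + OneD.b2r (cE ne src tgt (tgt e))).
  { assert (P := pos_INR (length (SE n x e))).
    destruct (cE ne src tgt (src e)) eqn:C1; destruct (cE ne src tgt (tgt e)) eqn:C2;
      unfold OneD.b2r; try lra.
    unfold cE in C1, C2. apply Bool.negb_false_iff, Nat.eqb_eq in C1, C2.
    assert (H0 : fst (x 0%nat) = e).
    { eapply both_leaves_all; eauto. apply (Hx 0%nat); lia. }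
    assert (In 0%nat (filter (fun i => Nat.eqb (fst (x i)) e) (seq 0 n))).
    { apply filter_In; split. apply in_seq; lia. apply Nat.eqb_eq; auto. }
    assert (1 <= length (SE n x e))%nat.
    { rewrite len_SE. unfold countN. destruct (filter _ _); [destruct H|simpl; lia]. }
    apply le_INR in H1. simpl in H1. lra. }
  split; auto.
  rewrite RInt_coq; auto. 2: { left; apply Hlen; auto. }
  replace (len e) with (len e - 0) at 1 by ring.
  apply (OneD.main1D _ Hlip (length (SE n x e))); auto.
  - left; apply Hlen; auto.
  - intros s Hs. unfold SE in Hs. apply in_map_iff in Hs as [i [<- Hi]].
    apply filter_In in Hi as [Hi Hf]. apply in_seq in Hi. apply Nat.eqb_eq in Hf.
    destruct (Hx i ltac:(lia)) as [_ Q]. rewrite Hf in Q. auto.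
  - eapply edge_bnd; eauto.
Qed.

Lemma sumR_zero k : sumR k (fun _ => 0) = 0.
Proof. induction k. reflexivity. rewrite sumR_S, IHk; ring. Qed.

Lemma ind_0 c k : (k <= c)%nat -> sumR k (fun e => if Nat.eqb c e then 1 else 0) = 0.
Proof.
  induction k; intros H. reflexivity. rewrite sumR_S, IHk by lia.
  destruct (Nat.eqb c k) eqn:E. apply Nat.eqb_eq in E; lia. ring.
Qed.

Lemma ind_le1 c k : sumR k (fun e => if Nat.eqb c e then 1 else 0) <= 1.
Proof.
  induction k. rewrite sumR_0; lra. rewrite sumR_S.
  destruct (Nat.eqb c k) eqn:E.
  - apply Nat.eqb_eq in E. subst. rewrite ind_0 by lia. lra.
  - lra.
Qed.

Lemma cnt_sum k ne (x : nat -> point) :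
  sumR ne (fun e => INR (countN k (fun i => Nat.eqb (fst (x i)) e))) <= INR k.
Proof.
  induction k.
  - simpl. rewrite sumR_zero. lra.
  - rewrite (sumR_ext ne _ (fun e => INR (countN k (fun i => Nat.eqb (fst (x i)) e)) +
                                (if Nat.eqb (fst (x k)) e then 1 else 0))).
    + rewrite sumR_plus. assert (Q := ind_le1 (fst (x k)) ne). rewrite S_INR. lra.
    + intros e _. rewrite countN_S, plus_INR. destruct (Nat.eqb (fst (x k)) e); simpl; ring.
Qed.

Lemma deg_case d1 d2 : (1 <= d1)%nat -> d1 <> 2%nat -> (1 <= d2)%nat -> d2 <> 2%nat ->
  OneD.b2r (negb (Nat.eqb d1 1)) + OneD.b2r (negb (Nat.eqb d2 1)) =
  2 * (if andb (Nat.leb 3 d1) (Nat.leb 3 d2) then 1 else 0) +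
  (if orb (andb (Nat.leb 3 d1) (Nat.eqb d2 1)) (andb (Nat.eqb d1 1) (Nat.leb 3 d2)) then 1 else 0).
Proof.
  intros H1 H2 H3 H4.
  destruct d1 as [|[|[|d1]]]; try lia; destruct d2 as [|[|[|d2]]]; try lia; simpl; unfold OneD.b2r; ring.
Qed.


Theorem mainTheorem15
  (nv ne : nat) (src tgt : nat -> nat) (len : nat -> R)
  (Hne : (1 <= ne)%nat)
  (Hends : forall e, (e < ne)%nat -> (src e < nv)%nat /\ (tgt e < nv)%nat)
  (Hloop : forall e, (e < ne)%nat -> src e <> tgt e)
  (Hpar : forall e f, (e < ne)%nat -> (f < ne)%nat -> e <> f ->
            ~ ((src e = src f /\ tgt e = tgt f) \/ (src e = tgt f /\ tgt e = src f)))
  (Hlen : forall e, (e < ne)%nat -> 0 < len e)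
  (Hconn : forall u v, (u < nv)%nat -> (v < nv)%nat -> exists w, walk ne src tgt u v w)
  (Hdeg2 : forall v, (v < nv)%nat -> degree ne src tgt v <> 2%nat)
  (n : nat) (Hn : (1 <= n)%nat)
  (x : nat -> point)
  (Hx : forall i, (i < n)%nat -> is_point ne len (x i)) :
  social_cost ne src tgt len n x >=
    (total_length ne len) ^ 2 /
    (2 * (2 * INR n + 2 * INR (card_EII ne src tgt) + INR (card_EIL ne src tgt))).
Proof.
  set (W := fun e => 2 * INR (length (SE n x e)) + OneD.b2r (cE ne src tgt (src e)) + OneD.b2r (cE ne src tgt (tgt e))).
  assert (HE := fun e He => edge_int nv ne src tgt len Hends Hloop Hlen Hconn n Hn x Hx e He).
  assert (S1 : sumR ne (fun e => len e ^ 2 / (2 * W e)) <= social_cost ne src tgt len n x).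
  { unfold social_cost. apply sumR_le. intros e He. apply (HE e He). }
  assert (S2 := sumR_CS ne len (fun e => 2 * W e) ltac:(intros e He; destruct (HE e He); unfold W; lra)).
  assert (Wpos : 0 < sumR ne W) by (apply sumR_pos; auto; intros e He; destruct (HE e He); unfold W; lra).
  assert (Wle : sumR ne W <= 2 * INR n + 2 * INR (card_EII ne src tgt) + INR (card_EIL ne src tgt)).
  { unfold W. rewrite !sumR_plus, sumR_scal.
    assert (A1 : sumR ne (fun e => INR (length (SE n x e))) <= INR n).
    { rewrite (sumR_ext ne _ (fun e => INR (countN n (fun i => Nat.eqb (fst (x i)) e)))).
      apply cnt_sum. intros; rewrite len_SE; auto. }
    assert (A2 : sumR ne (fun e => OneD.b2r (cE ne src tgt (src e))) + sumR ne (fun e => OneD.b2r (cE ne src tgt (tgt e)))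
                 = 2 * INR (card_EII ne src tgt) + INR (card_EIL ne src tgt)).
    { unfold card_EII, card_EIL. rewrite !INR_countN, <- sumR_plus, <- sumR_scal, <- sumR_plus.
      apply sumR_ext. intros e He. unfold cE. apply deg_case.
      - eapply deg_ge1; eauto. left; auto.
      - apply Hdeg2, Hends; auto.
      - eapply deg_ge1; eauto. right; auto.
      - apply Hdeg2, Hends; auto. }
    lra. }
  rewrite sumR_scal in S2.
  unfold total_length. apply Rle_ge.
  eapply Rle_trans; [|apply S1]. eapply Rle_trans; [|apply S2].
  unfold Rdiv. apply Rmult_le_compat_l. apply pow2_ge_0.
  apply Rinv_le_contravar; lra.
Qed.
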